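(* Let $n\ge 2$ and let $q$ be generic. Regard ${\mathbb{C}}^n$ as the fundamental ($n$-dimensional, highest weight $\omega_1$) module of $U_q(sl_n)$. Then its braided zeta function is \[\zeta_t({\mathbb{C}}^n)=\prod_{\substack{j=-(n-1)\\ \text{step } 2}}^{n-1}\frac{1}{1-q^jt},\] i.e. the product of $1/(1-q^jt)$ over $j\in\{-(n-1),-(n-3),\dots,n-3,n-1\}$.
   Context: Throughout, $q\in{\mathbb{C}}$ is generic (not a root of unity) and $(m)_q=(q^m-q^{-m})/(q-q^{-1})$ denotes the symmetric $q$-integer. For a complex simple Lie algebra $g$, finite-dimensional highest weight modules of the Drinfeld–Jimbo quantum group $U_q(g)$ form a ribbon braided category; for generic $q$ tensor products and decompositions into irreducibles follow the same pattern as classically. The multiplicative braided dimension (braided trace of the ribbon element) of the irreducible module $V(\Lambda)$ of highest weight $\Lambda$ is $\underline{\dim}'(V(\Lambda))=\prod_{\alpha>0}\frac{((\alpha,\Lambda+\rho))_q}{((\alpha,\rho))_q}$ (product over positive roots, $\rho$ the half-sum of positive roots, roots normalised with $(\alpha_i,\alpha_i)=2$), extended additively to direct sums. For an object $A$, $A^{(j)}\subseteq A^{\otimes j}$ denotes the subspace invariant under the $q$-Hecke algebra generated by (suitably normalised) braidings of adjacent tensor factors; for generic $q$ it is a $U_q(g)$-module with the same decomposition into irreducibles as the classical symmetric power $S^j(A)$ of the corresponding $g$-module. The braided zeta function is $\zeta_t(A)=\sum_{j\ge0}t^j\,\underline{\dim}'(A^{(j)})$. *)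

(* Defs.v *)
From HB Require Import structures.
From mathcomp Require Import all_boot all_order all_algebra.
Set Implicit Arguments. Unset Strict Implicit. Unset Printing Implicit Defensive.
Import Order.TTheory GRing.Theory Num.Theory.
Local Open Scope ring_scope.

Definition qint (C : fieldType) (q : C) (m : int) : C :=
  (q ^ m - q ^ (- m)) / (q - q^-1).

(* Dominant weights of sl_n given by their Dynkin labels:
   L k = label at simple root alpha_{k+1}, k = 0 .. n-2 (other values unused). *)
Definition weight := nat -> nat.

Definition rho_w : weight := fun _ => 1%N.

(* For the positive root alpha_{ab} = alpha_a + ... + alpha_{b-1} (0 <= a < b <= n-1,
   indices shifted to start at 0), with (alpha_i, alpha_i) = 2 and fundamental
   weights dual to simple coroots: (alpha_{ab}, L) = sum_{a <= k < b} L k. *)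
Definition pair_root (a b : nat) (L : weight) : nat := (\sum_(a <= k < b) L k)%N.

Definition wplus (L M : weight) : weight := fun k => (L k + M k)%N.

Definition bdim_irr (C : fieldType) (n : nat) (q : C) (L : weight) : C :=
  \prod_(a < n) \prod_(b < n | (a < b)%N)
     (qint q (pair_root a b (wplus L rho_w))%:Z / qint q (pair_root a b rho_w)%:Z).

(* A finite-dimensional module, up to isomorphism, is recorded by its
   decomposition into irreducibles: a multiset (seq) of dominant weights.
   The braided dimension is extended additively. *)
Definition bdim (C : fieldType) (n : nat) (q : C) (A : seq weight) : C :=
  \sum_(L <- A) bdim_irr n q L.

Definition mult_omega1 (j : nat) : weight := fun k => if k == 0%N then j else 0%N.

Definition fund_module : seq weight := [:: mult_omega1 1].

(* A^{(j)} for A = C^n: it has the decomposition of the classical symmetric power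
   S^j(C^n), which is the irreducible V(j omega_1). *)
Definition fund_sympow (j : nat) : seq weight := [:: mult_omega1 j].

Definition braided_zeta (C : fieldType) (n : nat) (q : C)
  (Apow : nat -> seq weight) : nat -> C := fun j => bdim n q (Apow j).

Definition series_mul_poly (C : fieldType) (f : nat -> C) (p : {poly C}) : nat -> C :=
  fun k => \sum_(i < k.+1) f i * p`_(k - i).

(* "q is generic": nonzero and not a root of unity. *)
Definition generic_q (C : fieldType) (q : C) : Prop :=
  q != 0 /\ forall k : nat, (0 < k)%N -> q ^+ k != 1.

(* Main.v *)
Require Import Defs.
From HB Require Import structures.
From mathcomp Require Import all_boot all_order all_algebra.
From mathcomp Require Import ring.
Import Order.TTheory GRing.Theory Num.Theory.
Set Implicit Arguments. Unset Strict Implicit.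
Local Open Scope ring_scope.

Lemma coef_lin (C : fieldType) (c : C) l :
  (1 - c *: 'X)`_l = if l == 0%N then 1 else if l == 1%N then -c else 0.
Proof.
rewrite coefB coef1 coefZ coefX.
by case: l => [|[|l]] /=; rewrite ?mulr0 ?mulr1 ?subr0 ?sub0r.
Qed.

Lemma sm_lin (C : fieldType) (f : nat -> C) c k :
  series_mul_poly f (1 - c *: 'X) k =
  f k - (if k is k'.+1 then c * f k' else 0).
Proof.
rewrite /series_mul_poly; case: k => [|k].
  by rewrite big_ord1 coef_lin /= mulr1 subr0.
rewrite big_ord_recr big_ord_recr /= !coef_lin subnn subSnn /=.
rewrite big1 ?add0r; last first.
  move=> i _; rewrite coef_lin.
  have h : (1 < k.+1 - i)%N.
    by rewrite subSn ?ltnS ?subn_gt0 // ltnW.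
  case: (k.+1 - i)%N h => [|[|l]] //= _; by rewrite mulr0.
by rewrite mulr1 mulrN addrC mulrC.
Qed.

Lemma sm_ext (C : fieldType) (f g : nat -> C) p :
  (forall j, f j = g j) -> forall k, series_mul_poly f p k = series_mul_poly g p k.
Proof. by move=> h k; rewrite /series_mul_poly; apply eq_bigr => i _; rewrite h. Qed.

Lemma sm_poly (C : fieldType) (f : nat -> C) p k :
  series_mul_poly f p k = ((\poly_(i < k.+1) f i) * p)`_k.
Proof. by rewrite coefM; apply eq_bigr => i _; rewrite coef_poly ltn_ord. Qed.

Lemma sm_assoc (C : fieldType) (f : nat -> C) p r k :
  series_mul_poly (series_mul_poly f p) r k = series_mul_poly f (p * r) k.
Proof.
rewrite [RHS]sm_poly mulrA coefM /series_mul_poly.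
apply eq_bigr => i _; congr (_ * _).
rewrite coefM; apply eq_bigr => j _; rewrite coef_poly.
have hi := ltn_ord i; have hj := ltn_ord j.
by rewrite (leq_ltn_trans _ hi) // -ltnS.
Qed.

Definition gq {C : fieldType} (Q : C) (m j : nat) : C :=
  \prod_(b < m) ((Q ^+ (b.+1 + j) - 1) / (Q ^+ b.+1 - 1)).

Lemma gq0 (C : fieldType) (Q : C) m :
  (forall k, (0 < k)%N -> Q ^+ k != 1) -> gq Q m 0 = 1.
Proof.
move=> hQ; rewrite /gq big1 // => b _; rewrite addn0 divff // subr_eq0 hQ //.
Qed.

Lemma gq_rec (C : fieldType) (Q : C) m j :
  (forall k, (0 < k)%N -> Q ^+ k != 1) ->
  gq Q m.+1 j.+1 - Q ^+ m.+1 * gq Q m.+1 j = gq Q m j.+1.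
Proof.
move=> hQ; rewrite /gq !prodf_div.
rewrite (big_ord_recr m (fun b : 'I_m.+1 => Q ^+ (b.+1 + j.+1) - 1)) /=.
rewrite (big_ord_recl m (fun b : 'I_m.+1 => Q ^+ (b.+1 + j) - 1)) /=.
rewrite (big_ord_recr m (fun b : 'I_m.+1 => Q ^+ b.+1 - 1)) /=.
rewrite (_ : \prod_(i < m) (Q ^+ ((bump 0 i).+1 + j) - 1) =
             \prod_(i < m) (Q ^+ (i.+1 + j.+1) - 1)); last first.
  by apply eq_bigr => i _; rewrite /bump /= add1n addSnnS.
set A := \prod_(i < m) (Q ^+ (i.+1 + j.+1) - 1).
set D := \prod_(i < m) (Q ^+ i.+1 - 1).
have hD : D != 0.
  by apply/prodf_neq0 => i _; rewrite subr_eq0 hQ.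
have hm : Q ^+ m.+1 - 1 != 0 by rewrite subr_eq0 hQ.
rewrite (_ : Q ^+ (m.+1 + j.+1) = Q ^+ m.+1 * Q ^+ j.+1); last by rewrite exprD.
rewrite add1n.
by field; rewrite hD hm.
Qed.

Lemma gq_series (C : fieldType) (Q : C) m :
  (forall k, (0 < k)%N -> Q ^+ k != 1) ->
  forall k, series_mul_poly (gq Q m) (\prod_(i < m.+1) (1 - Q ^+ i *: 'X)) k
    = (k == 0%N)%:R.
Proof.
move=> hQ; elim: m => [|m IH] k.
  rewrite big_ord1 sm_lin /gq !big_ord0.
  case: k => [|k]; rewrite /= ?subr0 //.
  by rewrite big_ord0 expr0 mulr1 subrr.
rewrite big_ord_recr /= mulrC -sm_assoc -(IH k).
apply sm_ext => j; rewrite sm_lin.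
case: j => [|j]; first by rewrite subr0 !gq0.
exact: gq_rec.
Qed.

Lemma sm_scale (C : fieldType) (f : nat -> C) (s : C) (p p0 : {poly C}) k :
  (forall l, p`_l = s ^+ l * p0`_l) ->
  series_mul_poly (fun j => s ^+ j * f j) p k = s ^+ k * series_mul_poly f p0 k.
Proof.
move=> h; rewrite /series_mul_poly mulr_sumr; apply eq_bigr => i _.
have hi : (i <= k)%N by rewrite -ltnS ltn_ord.
rewrite h (_ : s ^+ k = s ^+ i * s ^+ (k - i)); last by rewrite -exprD subnKC.
ring.
Qed.

Lemma scale_prod (C : fieldType) m (s : C) (c : nat -> C) l :
  (\prod_(i < m) (1 - (s * c i) *: 'X))`_l = s ^+ l * (\prod_(i < m) (1 - c i *: 'X))`_l.
Proof.
move: l; apply (big_ind2 (fun p p0 : {poly C} => forall l, p`_l = s ^+ l * p0`_l)).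
- by move=> l; rewrite coef1; case: l => [|l] /=; rewrite ?expr0 ?mul1r ?mulr0.
- move=> x1 x2 y1 y2 H1 H2 l; rewrite !coefM mulr_sumr; apply eq_bigr => i _.
  have hi : (i <= l)%N by rewrite -ltnS ltn_ord.
  rewrite H1 H2 (_ : s ^+ l = s ^+ i * s ^+ (l - i)); last by rewrite -exprD subnKC.
  ring.
- move=> i _ l; rewrite !coef_lin.
  by case: l => [|[|l]] /=; rewrite ?expr0 ?mul1r ?expr1 ?mulrN ?mulr0.
Qed.

Lemma genQ (C : fieldType) (q : C) :
  generic_q q -> forall k, (0 < k)%N -> (q^-1 ^+ 2) ^+ k != 1.
Proof.
move=> [hq0 hg] k hk; rewrite -exprM exprVn invr_eq1; apply: hg.
by rewrite muln_gt0.
Qed.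

Lemma qint_nat (C : fieldType) (q : C) (k : nat) :
  q != 0 -> qint q k%:Z = q ^+ k * (1 - (q^-1 ^+ 2) ^+ k) / (q - q^-1).
Proof.
move=> hq; rewrite /qint -exprnN -exprnP -exprM mulnC exprM exprVn.
congr (_ / _).
have hk : q ^+ k != 0 by rewrite expf_neq0.
by field.
Qed.

Lemma qden_neq0 (C : fieldType) (q : C) : generic_q q -> q - q^-1 != 0.
Proof.
move=> [hq0 hg]; apply/eqP => h.
have : q ^+ 2 = 1.
  by move/subr0_eq: h => h; rewrite expr2 {1}h mulVf.
by move/eqP; rewrite (negbTE (hg 2%N isT)).
Qed.

Lemma qint_neq0 (C : fieldType) (q : C) (k : nat) :
  generic_q q -> (0 < k)%N -> qint q k%:Z != 0.
Proof.
move=> hg hk; have [hq0 _] := hg.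
rewrite qint_nat // !mulf_neq0 ?expf_neq0 ?invr_eq0 ?qden_neq0 //.
by rewrite subr_eq0 eq_sym (genQ hg).
Qed.

Lemma pr_rho a b : pair_root a b rho_w = (b - a)%N.
Proof. by rewrite /pair_root /rho_w sum_nat_const_nat muln1. Qed.

Lemma pr_w0 j b : pair_root 0 b.+1 (wplus (mult_omega1 j) rho_w) = (j + b.+1)%N.
Proof.
rewrite /pair_root big_nat_recl // /wplus /mult_omega1 /rho_w /=.
rewrite (eq_bigr (fun _ => 1%N)) ?sum_nat_const_nat ?muln1 ?subn0 ?addnA ?addn1 //.
by rewrite addSnnS.
Qed.

Lemma pr_wS j a b : pair_root a.+1 b (wplus (mult_omega1 j) rho_w) = (b - a.+1)%N.
Proof.
rewrite -pr_rho /pair_root; apply eq_big_nat => k /andP [hk _].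
by rewrite /wplus /mult_omega1; case: k hk.
Qed.

Lemma prod_cs (C : fieldType) (c : C) m (G : 'I_m -> C) :
  \prod_(i < m) (c * G i) = c ^+ m * \prod_(i < m) G i.
Proof. by rewrite big_split /= prodr_const card_ord. Qed.

Lemma bdim_fund (C : fieldType) (q : C) m j :
  generic_q q ->
  bdim_irr m.+1 q (mult_omega1 j) = (q ^+ m) ^+ j * gq (q^-1 ^+ 2) m j.
Proof.
move=> hg; have [hq0 _] := hg.
rewrite /bdim_irr big_ord_recl /=.
rewrite [X in _ * X]big1 ?mulr1; last first.
  move=> a _; apply big1 => b hab.
  rewrite pr_wS pr_rho divff // qint_neq0 //.
  by rewrite subn_gt0.
rewrite big_mkcond big_ord_recl /= mul1r /gq -exprM mulnC exprM.
rewrite (eq_bigr (fun b : 'I_m => q ^+ j *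
   (((q^-1 ^+ 2) ^+ (b.+1 + j) - 1) / ((q^-1 ^+ 2) ^+ b.+1 - 1)))); last first.
  move=> b _; rewrite /bump /= add1n.
  rewrite pr_w0 pr_rho subn0 !qint_nat //.
  have h1 := qden_neq0 hg.
  have h2 : 1 - (q^-1 ^+ 2) ^+ b.+1 != 0 by rewrite subr_eq0 eq_sym (genQ hg).
  have h3 : (q^-1 ^+ 2) ^+ b.+1 - 1 != 0 by rewrite subr_eq0 (genQ hg).
  have h4 : q ^+ b.+1 != 0 by rewrite expf_neq0.
  have h5 : q ^+ j != 0 by rewrite expf_neq0.
  rewrite exprD [(b.+1 + j)%N]addnC exprD.
  field; rewrite h2 h3 h4 hq0 subr_eq0 -expr2 (hg.2 2%N isT) //.
exact: prod_cs.
Qed.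

Lemma qexp_lin (C : fieldType) (q : C) (m i : nat) :
  q != 0 -> q ^ (m%:Z - (2 * i)%:Z) = q ^+ m * (q^-1 ^+ 2) ^+ i.
Proof.
move=> hq; rewrite expfzDr // -exprnN -exprnP exprM exprVn //.
by rewrite -exprVn -exprVn exprAC.
Qed.

Theorem proposition4p1 (C : numClosedFieldType) (n : nat) (q : C) :
  (2 <= n)%N -> generic_q q ->
  forall k : nat,
    series_mul_poly (braided_zeta n q fund_sympow)
      (\prod_(i < n) (1 - (q ^ ((n.-1)%:Z - (2 * i)%:Z)) *: 'X)) k
    = (k == 0%N)%:R.
Proof.
move=> hn hg k; have [hq0 _] := hg.
case: n hn => [|m] // _ /=.
rewrite (sm_ext (g := fun j => (q ^+ m) ^+ j * gq (q^-1 ^+ 2) m j)); last first.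
  by move=> j; rewrite /braided_zeta /bdim /fund_sympow big_seq1 bdim_fund.
rewrite (eq_bigr (fun i : 'I_m.+1 => 1 - (q ^+ m * (q^-1 ^+ 2) ^+ i) *: 'X)); last first.
  by move=> i _; rewrite qexp_lin.
rewrite (sm_scale _ _ (p0 := \prod_(i < m.+1) (1 - (q^-1 ^+ 2) ^+ i *: 'X))); last first.
  by move=> l; rewrite scale_prod.
rewrite gq_series; last exact: genQ.
by case: k => [|k]; rewrite ?expr0 ?mul1r ?mulr0.
Qed.
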